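(* Let $n\in\mathbb{N}$ with $n\ge 2$ and define $$\alpha:=\frac{n+\sqrt{n^2+4}}{2},\qquad \gamma:=\frac1\alpha,\qquad \tau:=\frac{\log\alpha}{\log n}.$$ Then $\alpha\in D_{\gamma,\tau}$ and $\alpha$ is an isolated point of $D_{\gamma,\tau}$ (i.e. there is an open interval containing $\alpha$ whose intersection with $D_{\gamma,\tau}$ is $\{\alpha\}$).
   Context: For $\gamma>0$ and $\tau\ge 1$, the Diophantine set $D_{\gamma,\tau}$ is the set of all real numbers $\xi$ such that $|\xi q-p|\ge \gamma/q^{\tau}$ for all $p\in\mathbb{Z}$ and all $q\in\mathbb{N}=\{1,2,3,\dots\}$. *)

(* Defs.v *)
From Stdlib Require Import Reals.
Open Scope R_scope.

Definition Diophantine (gamma tau : R) (xi : R) : Prop :=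
  forall (p : Z) (q : nat), (1 <= q)%nat ->
    Rabs (xi * INR q - IZR p) >= gamma / Rpower (INR q) tau.

(* Main.v *)
Require Import Defs.
From Stdlib Require Import Reals Lra Lia Psatz ZArith Arith.
Open Scope R_scope.

Lemma inv_le_help (X Y : R) : 0 < X -> 1 <= Y * X -> / X <= Y.
Proof.
  intros HX H.
  replace Y with ((Y * X) * / X) by (field; lra).
  assert (0 < / X) by (apply Rinv_0_lt_compat; lra).
  nra.
Qed.

Lemma Rpower_base1 (t : R) : Rpower 1 t = 1.
Proof. unfold Rpower. rewrite ln_1, Rmult_0_r, exp_0. reflexivity. Qed.

Lemma main (n : nat) (a t : R) (hn : (2 <= n)%nat)
  (ha : a * (a - INR n) = 1) (hagt : INR n < a) (ht : 0 <= t)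
  (hR : Rpower (INR n) t = a) :
  forall q p, (1 <= q)%nat -> Rabs (a * INR q - IZR p) >= / a / Rpower (INR q) t.
Proof.
  assert (Hn2 : 2 <= INR n) by (replace 2 with (INR 2) by (simpl; lra); apply le_INR; lia).
  assert (Ha0 : 0 < a) by lra.
  intros q. induction q as [q IH] using lt_wf_ind. intros p Hq.
  assert (Hq1 : 1 <= INR q) by (replace 1 with (INR 1) by reflexivity; apply le_INR; lia).
  set (Rq := Rpower (INR q) t).
  assert (HRq : 1 <= Rq).
  { unfold Rq. rewrite <- (Rpower_base1 t). apply Rle_Rpower_l; lra. }
  set (e := a * INR q - IZR p).
  apply Rle_ge. unfold Rdiv. rewrite <- Rinv_mult.
  apply inv_le_help; [nra|].
  assert (caseA : a - INR n <= Rabs e -> 1 <= Rabs e * (a * Rq)).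
  { intro H. assert (0 <= a*Rq) by nra.
    assert (0 <= (Rabs e - (a - INR n)) * (a*Rq)) by (apply Rmult_le_pos; lra). nra. }
  destruct (Z_le_gt_dec p (Z.of_nat (n*q))) as [Hp|Hp].
  - apply caseA. apply IZR_le in Hp. rewrite <- INR_IZR_INZ, mult_INR in Hp.
    assert (e >= INR q * (a - INR n)) by (unfold e; lra).
    assert (0 <= e) by nra. rewrite Rabs_right by lra. nra.
  - assert (Hp' : (Z.of_nat (n*q) + 1 <= p)%Z) by lia.
    apply IZR_le in Hp'. rewrite plus_IZR, <- INR_IZR_INZ, mult_INR in Hp'.
    destruct (lt_dec q n) as [Hqn|Hqn].
    + apply caseA.
      assert (INR q <= INR n - 1).
      { replace 1 with (INR 1) by reflexivity. rewrite <- minus_INR by lia. apply le_INR; lia. }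
      assert (-e >= 1 - INR q * (a - INR n)) by (unfold e; lra).
      assert (a * (-e) >= 1) by nra.
      assert (-e > 0) by nra. rewrite Rabs_left by lra. nra.
    + destruct (Rle_dec (a - INR n) (Rabs e)) as [HA|HA]; [now apply caseA|].
      destruct (Rle_lt_dec (- INR q) (INR n * a * a * e)) as [HC|HB].
      *
        set (z := (p - Z.of_nat (n*q))%Z).
        set (q' := Z.to_nat z).
        assert (Hz : (0 <= z)%Z) by (unfold z; lia).
        assert (Hq' : INR q' = IZR p - INR n * INR q).
        { unfold q'. rewrite INR_IZR_INZ, Z2Nat.id by lia. unfold z.
          rewrite minus_IZR, <- INR_IZR_INZ, mult_INR. reflexivity. }
        assert (Hq'1 : (1 <= q')%nat).
        { apply INR_le. simpl. lra. }
        assert (Hkey : a * a * (INR q - INR n * INR q') = INR q + INR n * a * a * e).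
        { rewrite Hq'. unfold e.
          assert (a * a = INR n * a + 1) by nra.
          assert (K : a*a + INR n*INR n*a*a - 1 - INR n*a*a*a = 0).
          { replace (a*a + INR n*INR n*a*a - 1 - INR n*a*a*a) with ((a*a - INR n * a - 1)*(1 - INR n * a)) by ring.
            replace (a*a - INR n * a - 1) with 0 by lra. ring. }
          replace (a * a * (INR q - INR n * (IZR p - INR n * INR q))) with
            (INR q + INR n * a * a * (a * INR q - IZR p) + INR q * (a*a + INR n*INR n*a*a - 1 - INR n*a*a*a)) by ring.
          rewrite K. ring. }
        assert (Hnq : (n * q' <= q)%nat).
        { apply INR_le. rewrite mult_INR.
          assert (H0 : 0 <= a*a*(INR q - INR n*INR q')) by lra.
          assert (0 < a*a) by nra.
          assert (0 <= INR q - INR n*INR q'); [|lra].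
          apply (Rmult_le_reg_l (a*a)); lra. }
        assert (Hlt : (q' < q)%nat) by nia.
        specialize (IH q' Hlt (Z.of_nat q) Hq'1).
        rewrite <- INR_IZR_INZ in IH.
        assert (Heq : a * INR q' - INR q = - a * e).
        { rewrite Hq'. unfold e. nra. }
        rewrite Heq, Rabs_mult, Rabs_Ropp, Rabs_right in IH by lra.
        set (Rq' := Rpower (INR q') t) in *.
        assert (HRq' : 0 < Rq') by (unfold Rq', Rpower; apply exp_pos).
        assert (HRR : a * Rq' <= Rq).
        { unfold Rq, Rq'. rewrite <- hR, Rpower_mult_distr by lra.
          apply Rle_Rpower_l; [lra|]. split.
          - assert (1 <= INR q') by (replace 1 with (INR 1) by reflexivity; apply le_INR; lia). nra.
          - rewrite <- mult_INR. apply le_INR. exact Hnq. }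
        apply Rge_le in IH.
        assert (H1 : 1 <= a * Rabs e * (a * Rq')).
        { assert (HH: / a / Rq' * (a * Rq') = 1) by (field; lra).
          assert (0 <= a*Rq') by nra. nra. }
        assert (0 <= Rabs e) by apply Rabs_pos.
        assert (0 <= (Rq - a*Rq') * (a * Rabs e)) by (apply Rmult_le_pos; nra). nra.
      *
        assert (Hqn' : INR n <= INR q) by (apply le_INR; lia).
        assert (HRq2 : a <= Rq).
        { unfold Rq. rewrite <- hR. apply Rle_Rpower_l; lra. }
        assert (0 < INR n * a * a) by (apply Rmult_lt_0_compat; [|lra]; apply Rmult_lt_0_compat; lra).
        assert (e < 0).
        { destruct (Rlt_le_dec e 0); [assumption|].
          assert (0 <= INR n * a * a * e) by (apply Rmult_le_pos; lra). lra. }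
        rewrite Rabs_left by lra.
        assert (Hm : INR q < - e * (INR n * a * a)) by lra.
        assert (0 <= (Rq - a) * INR q) by (apply Rmult_le_pos; lra).
        assert (0 <= (-e * (INR n*a*a) - INR q) * Rq) by (apply Rmult_le_pos; lra).
        assert (0 <= (INR q - INR n) * a) by (apply Rmult_le_pos; lra).
        apply (Rmult_le_reg_l (INR n * a)); [nra|].
        nra.
Qed.

Theorem theorem1 (n : nat) (hn : (2 <= n)%nat) :
  let alpha := (INR n + sqrt (INR n ^ 2 + 4)) / 2 in
  let gamma := / alpha in
  let tau := ln alpha / ln (INR n) in
  Diophantine gamma tau alpha /\
  exists a b : R, a < alpha < b /\
    forall x : R, a < x < b -> Diophantine gamma tau x -> x = alpha.
Proof.
  intros alpha gamma tau.
  assert (Hn2 : 2 <= INR n) by (replace 2 with (INR 2) by (simpl; lra); apply le_INR; lia).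
  set (s := sqrt (INR n ^ 2 + 4)) in alpha.
  assert (Hs2 : s * s = INR n ^ 2 + 4) by (unfold s; apply sqrt_sqrt; nra).
  assert (Hs0 : 0 <= s) by (unfold s; apply sqrt_pos).
  assert (Hsn : INR n < s) by nra.
  assert (hagt : INR n < alpha) by (unfold alpha; lra).
  assert (ha : alpha * (alpha - INR n) = 1) by (unfold alpha; nra).
  assert (Hlnn : 0 < ln (INR n)) by (rewrite <- ln_1; apply ln_increasing; lra).
  assert (Hlna : 0 < ln alpha) by (rewrite <- ln_1; apply ln_increasing; lra).
  assert (ht : 0 <= tau) by (unfold tau; apply Rlt_le, Rdiv_lt_0_compat; lra).
  assert (hR : Rpower (INR n) tau = alpha).
  { unfold Rpower, tau. replace (ln alpha / ln (INR n) * ln (INR n)) with (ln alpha) by (field; lra).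
    apply exp_ln. lra. }
  clearbody alpha tau. unfold gamma. clear gamma.
  split.
  - intros p q Hq. apply (main n alpha tau); auto.
  - exists (INR n), (INR n + / INR n). split.
    + split; [lra|].
      assert (/ alpha < / INR n) by (apply Rinv_lt_contravar; nra).
      assert (/ alpha = alpha - INR n) by (field_simplify_eq; nra || lra).
      lra.
    + intros x [Hx1 Hx2] D.
      pose proof (D (Z.of_nat n) 1%nat (le_n 1)) as D1.
      pose proof (D (Z.of_nat (n*n+1)) n ltac:(lia)) as D2.
      rewrite <- INR_IZR_INZ in D1, D2.
      rewrite plus_INR, mult_INR in D2. simpl INR in D1, D2.
      rewrite Rpower_base1 in D1. rewrite hR in D2.
      assert (Hinv : / alpha = alpha - INR n) by (field_simplify_eq; nra || lra).
      rewrite Rmult_1_r in D1.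
      rewrite Rabs_right in D1 by lra.
      assert (Hxn : x * INR n < INR n * INR n + 1).
      { assert (x * INR n < (INR n + / INR n) * INR n) by nra.
        replace ((INR n + / INR n) * INR n) with (INR n * INR n + 1) in H by (field; lra). lra. }
      rewrite Rabs_left in D2 by lra.
      unfold Rdiv in D1, D2.
      assert (/ alpha * / alpha = (alpha - INR n) * (alpha - INR n)) by (rewrite Hinv; ring).
      nra.
Qed.
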